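(* Fix $p\in\mathbb{N}_0$, and let the polynomials $q_{p,\nu}$ and the coefficients $\alpha_{p,\nu},\beta_{p,\nu}$ be defined by the recursive construction described in the context. Then for every integer $\nu\ge1$ with $\nu\le p$, \[ q_{p,\nu-1}^{(\nu)}(\pm1)=\frac{(\pm1)^p}{(-2)^{\nu+1}\,\nu!}\left[\frac{(p+1+\nu)!}{(p+1-\nu)!}\pm\frac{(p+\nu)!}{(p-\nu)!}\right], \] and \[ \alpha_{p,\nu}=\frac{-1}{(-2)^{\nu+1}\,\nu!}\,\frac{(p+1+\nu)!}{(p+1-\nu)!},\qquad \beta_{p,\nu}=\frac{-1}{(-2)^{\nu+1}\,\nu!}\,\frac{(p+\nu)!}{(p-\nu)!}. \]
   Context: $L_j$ denotes the Legendre polynomial of degree $j$ on $(-1,1)$, normalized so that $L_j(1)=1$. The $n$-th primitive of $L_i$ is defined by $\psi_{i,0}:=L_i$ and $\psi_{i,n}(x):=\int_{-1}^x\psi_{i,n-1}(\zeta)\,d\zeta$ for $n\ge1$. Recursive construction: - Set $q_{p,0}:=\tfrac12(L_p+L_{p+1})$. - For $\nu\ge0$, set $q_{p,\nu+1}:=q_{p,\nu}+\alpha_{p,\nu+1}\psi_{p,\nu+1}+\beta_{p,\nu+1}\psi_{p+1,\nu+1}$, where \[ \alpha_{p,\nu+1}:=-\frac{q_{p,\nu}^{(\nu+1)}(1)+(-1)^p q_{p,\nu}^{(\nu+1)}(-1)}{2},\qquad \beta_{p,\nu+1}:=-\frac{q_{p,\nu}^{(\nu+1)}(1)-(-1)^p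 q_{p,\nu}^{(\nu+1)}(-1)}{2}. \] *)

(* Defs.v *)
From HB Require Import structures.
From mathcomp Require Import all_boot all_order all_algebra.
Set Implicit Arguments. Unset Strict Implicit. Unset Printing Implicit Defensive.
Import Order.TTheory GRing.Theory Num.Theory.
Local Open Scope ring_scope.

Section Legendre.
Variable R : realFieldType.

(* Legendre polynomial of degree j, via Rodrigues' formula
   L_j = 1/(2^j j!) d^j/dx^j (x^2-1)^j ; this gives L_j(1) = 1. *)
Definition legendre (j : nat) : {poly R} :=
  ((2 ^+ j * j`!%:R)^-1) *: (('X ^+ 2 - 1) ^+ j)^`(j).

Definition antiderL (p : {poly R}) : {poly R} :=
  \poly_(i < (size p).+1) (if i is k.+1 then p`_k / k.+1%:R else 0).

Definition primL (p : {poly R}) : {poly R} :=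
  antiderL p - ((antiderL p).[-1])%:P.

Fixpoint psiL (i n : nat) : {poly R} :=
  match n with
  | 0 => legendre i
  | n'.+1 => primL (psiL i n')
  end.

Definition alpha_of (p : nat) (q : {poly R}) (k : nat) : R :=
  - ((q^`(k)).[1] + (-1) ^+ p * (q^`(k)).[-1]) / 2.
Definition beta_of (p : nat) (q : {poly R}) (k : nat) : R :=
  - ((q^`(k)).[1] - (-1) ^+ p * (q^`(k)).[-1]) / 2.

Fixpoint qseq (p nu : nat) : {poly R} :=
  match nu with
  | 0 => 2^-1 *: (legendre p + legendre p.+1)
  | n.+1 => let q := qseq p n in
            q + alpha_of p q n.+1 *: psiL p n.+1 + beta_of p q n.+1 *: psiL p.+1 n.+1
  end.

(* alpha_{p,nu}, beta_{p,nu} for nu >= 1 (value at nu = 0 is irrelevant) *)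
Definition alphaq (p nu : nat) : R :=
  if nu is n.+1 then alpha_of p (qseq p n) n.+1 else 0.
Definition betaq (p nu : nat) : R :=
  if nu is n.+1 then beta_of p (qseq p n) n.+1 else 0.

End Legendre.

(* Main.v *)
Require Import Defs.
From HB Require Import structures.
From mathcomp Require Import all_boot all_order all_algebra.
From mathcomp Require Import ring lra zify.
Import Order.TTheory GRing.Theory Num.Theory.
Local Open Scope ring_scope.

Section S.
Variable R : realFieldType.

Lemma fact_neq0 n : (n`!)%:R != 0 :> R.
Proof. by rewrite pnatr_eq0 -lt0n fact_gt0. Qed.

Lemma natS_neq0 n : (n.+1)%:R != 0 :> R.
Proof. by rewrite pnatr_eq0. Qed.

Lemma derivn_add (P : {poly R}) n m : P^`(n)^`(m) = P^`(n + m).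
Proof.
elim: m => [|m IH]; first by rewrite derivn0 addn0.
by rewrite derivnS IH addnS derivnS.
Qed.

Lemma derivn_shift (P : {poly R}) k s :
  (P \Po ('X + s%:P))^`(k) = P^`(k) \Po ('X + s%:P).
Proof.
elim: k => [|k IH]; first by rewrite !derivn0.
by rewrite !derivnS IH deriv_comp derivD derivX derivC addr0 mulr1.
Qed.

Lemma derivn_at (P : {poly R}) k s :
  P^`(k).[s] = (P \Po ('X + s%:P))`_k * k`!%:R.
Proof.
have := congr1 (fun q => q.[0]) (derivn_shift P k s).
rewrite /= horner_comp !hornerE => <-.
by rewrite horner_coef0 coef_derivn addn0 ffactnn mulr_natr.
Qed.

Lemma coef_XaddC_exp (c : R) n j :
  (('X + c%:P) ^+ n)`_j = c ^+ (n - j) *+ 'C(n, j).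
Proof.
rewrite addrC exprDn coef_sum.
have E : forall i : 'I_n.+1, ((c%:P ^+ (n - i) * 'X ^+ i) *+ 'C(n, i))`_j
   = if (i == j :> nat) then c ^+ (n - j) *+ 'C(n, j) else 0.
  move=> i; rewrite coefMn.
  have -> : c%:P ^+ (n - i) = (c ^+ (n - i))%:P by rewrite rmorphXn.
  rewrite coefCM coefXn.
  have [<-|ne] := eqVneq (i : nat) j; first by rewrite mulr1.
  by rewrite mulr0 mul0rn.
under eq_bigr => i _ do rewrite E.
case: (ltnP j n.+1) => hj.
  rewrite (bigD1 (Ordinal hj)) //= eqxx big1 ?addr0 // => i /negbTE.
  by rewrite -val_eqE /= => ->.
rewrite big1 ?bin_small ?mulr0n // => i _.
by case: eqP => // hi; move: (ltn_ord i); rewrite hi ltnNge hj.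
Qed.

Definition aa (n j : nat) : R :=
  (n + j)`!%:R * ('C(n, j))%:R / (2 ^+ j * n`!%:R).

Lemma legendre_val n j (s : R) : s ^+ 2 = 1 ->
  ((legendre R n)^`(j)).[s] = s ^+ (n + j) * aa n j.
Proof.
move=> hs.
rewrite /legendre -derivnZ derivn_add derivnZ hornerZ derivn_at.
have E : forall a b : {poly R}, b ^+ 2 = 1 -> (a + b) ^+ 2 - 1 = a * (a + b *+ 2).
  by move=> a b <-; ring.
rewrite rmorphXn /= comp_polyB comp_polyC rmorphXn /= comp_polyX E;
  last by rewrite -rmorphXn /= hs.
rewrite exprMn coefXnM ltnNge leq_addr /= addKn -rmorphMn /= coef_XaddC_exp.
rewrite /aa.
case: (leqP j n) => hj; last first.
  by rewrite bin_small // mulr0n !(mul0r, mulr0).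
have [r ->] : exists r, n = (j + r)%N.
  by exists (n - j)%N; rewrite subnKC.
rewrite addKn.
have h2 : (2 : R) != 0 by rewrite pnatr_eq0.
have hf := fact_neq0 (j + r).
have -> : s ^+ (j + r + j) = s ^+ r.
  by rewrite (addnC j r) -addnA addnn -mul2n exprD exprM hs expr1n mulr1.
have -> : s *+ 2 = s * 2 by rewrite mulr_natr.
rewrite exprMn exprD -mulr_natr.
field.
by rewrite hf mul1r !expf_neq0.
Qed.

Lemma deriv_primL (P : {poly R}) : (primL P)^`() = P.
Proof.
rewrite /primL derivB derivC subr0; apply/polyP => i.
rewrite coef_deriv /antiderL coef_poly ltnS.
case: ltnP => h; first by rewrite -[RHS](divfK (natS_neq0 i)) mulr_natr.
by rewrite mul0rn nth_default.
Qed.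

Lemma psi_deriv i k m : (k <= m)%N ->
  (psiL R i k)^`(m) = (legendre R i)^`(m - k).
Proof.
elim: k m => [|k IH] m hk; first by rewrite subn0.
case: m hk => // m hk.
by rewrite derivSn [psiL _ _ _]/= deriv_primL IH // subSS.
Qed.

Definition Ac p k : R := if k is 0 then 2^-1 else alphaq R p k.
Definition Bc p k : R := if k is 0 then 2^-1 else betaq R p k.

Lemma qseq_deriv p n m : (n <= m)%N ->
  (qseq R p n)^`(m) = \sum_(k < n.+1)
     (Ac p k *: (legendre R p)^`(m - k) + Bc p k *: (legendre R p.+1)^`(m - k)).
Proof.
elim: n => [|n IH] hn.
  by rewrite big_ord_recl big_ord0 addr0 /= derivnZ derivnD subn0 scalerDr.
rewrite big_ord_recr -IH; last exact: ltnW.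
have -> : qseq R p n.+1 = qseq R p n + alphaq R p n.+1 *: psiL R p n.+1
   + betaq R p n.+1 *: psiL R p.+1 n.+1 by [].
by rewrite !derivnD (derivnZ m (alphaq R p n.+1)) (derivnZ m (betaq R p n.+1)) !psi_deriv // -addrA.
Qed.

Lemma aa_n0 n : aa n 0 = 1.
Proof. by rewrite /aa addn0 bin0 expr0 mul1r mulr1 divff // fact_neq0. Qed.

Lemma aa_small n j : (n < j)%N -> aa n j = 0.
Proof. by move=> h; rewrite /aa bin_small // mulr0 mul0r. Qed.

Lemma aaE n j : (j <= n)%N ->
  aa n j = (n + j)`!%:R / (2 ^+ j * j`!%:R * (n - j)`!%:R).
Proof.
move=> hj; rewrite /aa.
have hC : ('C(n, j))%:R = n`!%:R / (j`!%:R * (n - j)`!%:R) :> R.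
  by rewrite -(bin_fact hj) !natrM mulfK // mulf_neq0 // fact_neq0.
rewrite hC; field.
by rewrite !fact_neq0 expf_neq0 // pnatr_eq0.
Qed.

Lemma aaE' j r : aa (j + r) j = (j + r + j)`!%:R / (2 ^+ j * j`!%:R * r`!%:R).
Proof. by rewrite aaE ?leq_addr // addKn. Qed.

Lemma aa_rec n j : aa n.+2 j.+1 = (2 * n + 3)%:R * aa n.+1 j + aa n j.+1.
Proof.
have h2 : (2 : R) != 0 by rewrite pnatr_eq0.
case: (ltngtP j n) => hj.
- have [r ->] : exists r, n = (j.+1 + r)%N by exists (n - j.+1)%N; rewrite subnKC.
  have -> : (j.+1 + r).+2 = (j.+1 + r.+2)%N by rewrite !addnS.
  have -> : (j.+1 + r).+1 = (j + r.+2)%N by rewrite !addnS addSn.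
  rewrite !aaE'.
  have -> : (j.+1 + r.+2 + j.+1)%N = (j + r + j).+4 by rewrite !addnS !addSn.
  have -> : (j + r.+2 + j)%N = (j + r + j).+2 by rewrite !addnS !addSn.
  have -> : (j.+1 + r + j.+1)%N = (j + r + j).+2 by rewrite !addnS !addSn.
  rewrite !factS !natrM exprS.
  have hF := fact_neq0 (j + r + j); have hG := fact_neq0 j; have hH := fact_neq0 r.
  have ht : (2 : R) ^+ j != 0 by rewrite expf_neq0.
  move: hF hG hH ht.
  set F := ((j+r+j)`!)%:R; set G := (j`!)%:R; set H := (r`!)%:R; set t := 2 ^+ j.
  move=> hF hG hH ht.
  field.
  by rewrite ht !fact_neq0 !nat1r -natrD !pnatr_eq0.
- rewrite (@aa_small n j.+1) ?addr0; last exact: (ltn_trans hj).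
  move: hj; rewrite leq_eqVlt => /orP [/eqP <-|hj2]; last first.
    by rewrite !aa_small ?mulr0 // ltnS ltnW.
  rewrite !aaE // !subnn !addSn !addnS !factS !natrM exprS fact0 mulr1.
  have hF := fact_neq0 (n + n); have hG := fact_neq0 n.
  have ht : (2 : R) ^+ n != 0 by rewrite expf_neq0.
  move: hF hG ht.
  set F := ((n + n)`!)%:R; set G := (n`!)%:R; set t := 2 ^+ n.
  move=> hF hG ht.
  field.
  by rewrite !fact_neq0 ?expf_neq0 // ?nat1r -?natrD ?pnatr_eq0.
- rewrite hj; rewrite (@aa_small n n.+1) ?addr0 //.
  rewrite !aaE // ?leqW // !subSnn !addSn !addnS !factS !natrM exprS fact0 mulr1.
  have hF := fact_neq0 (n + n); have hG := fact_neq0 n.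
  have ht : (2 : R) ^+ n != 0 by rewrite expf_neq0.
  move: hF hG ht.
  set F := ((n + n)`!)%:R; set G := (n`!)%:R; set t := 2 ^+ n.
  move=> hF hG ht.
  field.
  by rewrite !fact_neq0 ?expf_neq0 // ?nat1r -?natrD ?pnatr_eq0.
Qed.

Fixpoint Yp (s : R) (n : nat) : {poly R} * {poly R} :=
  match n with
  | 0 => (1, 1 + s *: 'X)
  | n'.+1 => let ab := Yp s n' in
     (ab.2, ab.1 + ((2 * n' + 3)%:R * s) *: ('X * ab.2))
  end.

Lemma Yp_coef s n : forall j,
  ((Yp s n).1)`_j = s ^+ j * aa n j /\ ((Yp s n).2)`_j = s ^+ j * aa n.+1 j.
Proof.
elim: n => [|n IH] j.
  split.
    rewrite /= coef1; case: j => [|j]; first by rewrite aa_n0 expr0 mul1r.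
    by rewrite aa_small // mulr0.
  rewrite /= coefD coefZ coef1 coefX.
  case: j => [|[|j]] /=.
  - by rewrite !aa_n0 expr0 mul1r mulr0 addr0.
  - rewrite aaE // /= !factS fact0 expr1; by field.
  - by rewrite aa_small //; ring.
split; first by case: (IH j).
rewrite [Yp s n.+1]/= coefD coefZ coefXM.
case: j => [|j] /=.
  by rewrite mulr0 addr0 !aa_n0 expr0 mul1r; case: (IH 0) => -> _; rewrite aa_n0 expr0 mul1r.
case: (IH j.+1) => -> _; case: (IH j) => _ ->.
rewrite aa_rec exprS; ring.
Qed.

Lemma G_const n :
  (Yp (-1) n).1 * (Yp 1 n).2 + (Yp (-1) n).2 * (Yp 1 n).1 = 2%:P.
Proof.
elim: n => [|n IH].
  rewrite /= scaleN1r scale1r polyC_natr /=; ring.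
rewrite [Yp (-1) n.+1]/= [Yp 1 n.+1]/= -IH.
rewrite -!mul_polyC mulrN1 mulr1 polyCN.
cbn [fst snd]; ring.
Qed.

Lemma bessel p m : (0 < m)%N ->
  \sum_(k < m.+1) (-1) ^+ k * (aa p.+1 k * aa p (m - k) + aa p k * aa p.+1 (m - k)) = 0.
Proof.
move=> hm.
have := congr1 (fun q : {poly R} => q`_m) (G_const p).
rewrite /= coefC -(prednK hm) /= prednK // coefD !coefM -big_split /= => H; apply: (etrans _ H).
apply: eq_bigr => k _.
case: (Yp_coef (-1) p k) => -> ->.
case: (Yp_coef 1 p (m - k)) => -> ->.
rewrite !expr1n; ring.
Qed.

Lemma antisym p m :
  \sum_(k < m.+1) (aa p.+1 k * aa p (m - k) - aa p k * aa p.+1 (m - k)) = 0.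
Proof.
rewrite sumrB; apply/eqP; rewrite subr_eq0; apply/eqP.
rewrite (reindex_inj rev_ord_inj); apply: eq_bigr => k _.
rewrite /= subSS subKn; first exact: mulrC.
by rewrite -ltnS ltn_ord.
Qed.

Definition HypAB p n := forall k, (0 < k)%N -> (k < n)%N ->
  alphaq R p k = (-1) ^+ k * 2^-1 * aa p.+1 k /\
  betaq R p k = (-1) ^+ k * 2^-1 * aa p k.

Lemma AcE p n k : HypAB p n -> (k < n)%N -> Ac p k = (-1) ^+ k * 2^-1 * aa p.+1 k.
Proof.
move=> H hk; case: k hk => [|k] hk; first by rewrite aa_n0 expr0 mul1r mulr1.
by case: (H k.+1 isT hk).
Qed.

Lemma BcE p n k : HypAB p n -> (k < n)%N -> Bc p k = (-1) ^+ k * 2^-1 * aa p k.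
Proof.
move=> H hk; case: k hk => [|k] hk; first by rewrite aa_n0 expr0 mul1r mulr1.
by case: (H k.+1 isT hk).
Qed.

Lemma val1 p n : HypAB p n.+1 ->
  ((qseq R p n)^`(n.+1)).[1] = - ((-1) ^+ n.+1 * 2^-1) * (aa p.+1 n.+1 + aa p n.+1).
Proof.
move=> H.
rewrite qseq_deriv // horner_sum.
have B := @bessel p n.+1 (ltn0Sn n).
rewrite big_ord_recr /= subnn !aa_n0 in B.
have S : \sum_(k < n.+1) (-1) ^+ k * (aa p.+1 k * aa p (n.+1 - k) + aa p k * aa p.+1 (n.+1 - k))
  = - ((-1) ^+ n.+1 * (aa p.+1 n.+1 * 1 + aa p n.+1 * 1)).
  by apply/eqP; rewrite -addr_eq0 B.
rewrite (eq_bigr (fun k : 'I_n.+1 => 2^-1 * ((-1) ^+ k * (aa p.+1 k * aa p (n.+1 - k) + aa p k * aa p.+1 (n.+1 - k))))).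
  by rewrite -mulr_sumr S; ring.
move=> k _.
rewrite hornerD !hornerZ !legendre_val ?expr1n // (AcE _ _ _ H) // (BcE _ _ _ H) //.
ring.
Qed.

Lemma valm1 p n : HypAB p n.+1 ->
  ((qseq R p n)^`(n.+1)).[-1] = - ((-1) ^+ p * ((-1) ^+ n.+1 * 2^-1)) * (aa p.+1 n.+1 - aa p n.+1).
Proof.
move=> H.
rewrite qseq_deriv // horner_sum.
have B := antisym p n.+1.
rewrite big_ord_recr /= subnn !aa_n0 in B.
have S : \sum_(k < n.+1) (aa p.+1 k * aa p (n.+1 - k) - aa p k * aa p.+1 (n.+1 - k))
  = - (aa p.+1 n.+1 * 1 - aa p n.+1 * 1).
  by apply/eqP; rewrite -addr_eq0 B.
rewrite (eq_bigr (fun k : 'I_n.+1 => ((-1) ^+ p * ((-1) ^+ n.+1 * 2^-1)) * (aa p.+1 k * aa p (n.+1 - k) - aa p k * aa p.+1 (n.+1 - k)))).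
  by rewrite -mulr_sumr S; ring.
move=> k _.
have hs : (-1 : R) ^+ 2 = 1 by rewrite sqrrN expr1n.
rewrite hornerD !hornerZ !legendre_val // (AcE _ _ _ H) // (BcE _ _ _ H) //.
have hk : (k <= n.+1)%N by rewrite ltnW.
have E1 : (-1 : R) ^+ k * (-1) ^+ (p + (n.+1 - k)) = (-1) ^+ p * (-1) ^+ n.+1.
  by rewrite -!exprD addnCA subnKC.
have E2 : (-1 : R) ^+ (p.+1 + (n.+1 - k)) = - (-1) ^+ (p + (n.+1 - k)).
  by rewrite addSn exprS mulN1r.
rewrite E2.
transitivity (2^-1 * ((-1) ^+ k * (-1) ^+ (p + (n.+1 - k))) *
   (aa p.+1 k * aa p (n.+1 - k) - aa p k * aa p.+1 (n.+1 - k))); first by ring.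
rewrite E1; ring.
Qed.

Lemma mainAB p : forall nu, (0 < nu)%N ->
  alphaq R p nu = (-1) ^+ nu * 2^-1 * aa p.+1 nu /\
  betaq R p nu = (-1) ^+ nu * 2^-1 * aa p nu.
Proof.
elim/ltn_ind => nu IH hnu.
case: nu hnu IH => // n _ IH.
have H : HypAB p n.+1 by move=> k hk hkn; exact: IH.
have ff : (-1 : R) ^+ p * (-1) ^+ p = 1 by rewrite -exprMn mulrNN mulr1 expr1n.
rewrite /alphaq /betaq /alpha_of /beta_of (val1 _ _ H) (valm1 _ _ H).
set f := (-1 : R) ^+ p; set e := (-1 : R) ^+ n.+1.
split.
  transitivity (- (- (e * 2^-1) * (aa p.+1 n.+1 + aa p n.+1) - (f * f) * (e * 2^-1) * (aa p.+1 n.+1 - aa p n.+1)) / 2); first by ring.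
  by rewrite ff; field; rewrite ?pnatr_eq0.
transitivity (- (- (e * 2^-1) * (aa p.+1 n.+1 + aa p n.+1) + (f * f) * (e * 2^-1) * (aa p.+1 n.+1 - aa p n.+1)) / 2); first by ring.
by rewrite ff; field; rewrite ?pnatr_eq0.
Qed.
End S.

Theorem lemma6 (R : realFieldType) (p nu : nat) :
  (1 <= nu)%N -> (nu <= p)%N ->
  let c : R := ((-2) ^+ nu.+1 * nu`!%:R)^-1 in
  let A : R := (p.+1 + nu)`!%:R / (p.+1 - nu)`!%:R in
  let B : R := (p + nu)`!%:R / (p - nu)`!%:R in
  [/\ ((qseq R p nu.-1)^`(nu)).[1] = c * (A + B),
      ((qseq R p nu.-1)^`(nu)).[-1] = (-1) ^+ p * c * (A - B),
      alphaq R p nu = - c * A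
    & betaq R p nu = - c * B].
Proof.
case: nu => // n _ hnp c A B.
have H : HypAB R p n.+1 by move=> k hk _; exact: mainAB.
have [ha hb] := @mainAB R p n.+1 (ltn0Sn n).
rewrite (val1 _ _ _ H) (valm1 _ _ _ H) ha hb.
set X : R := 2 ^+ n.+1 * (n.+1)`!%:R.
have hX : X != 0 by rewrite mulf_neq0 ?fact_neq0 // expf_neq0 // pnatr_eq0.
have hA : aa R p.+1 n.+1 = A / X.
  rewrite aaE; last exact: leqW.
  rewrite /A /X; field.
  by rewrite !fact_neq0 expf_neq0 // pnatr_eq0.
have hB : aa R p n.+1 = B / X.
  rewrite aaE //.
  rewrite /B /X; field.
  by rewrite !fact_neq0 expf_neq0 // pnatr_eq0.
have e_inv : ((-1 : R) ^+ n)^-1 = (-1) ^+ n by rewrite -exprVn invrN1.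
have hc : c = - ((-1) ^+ n.+1 * 2^-1) / X.
  rewrite /c /X.
  have -> : (-2 : R) = -1 * 2 by rewrite mulN1r.
  rewrite exprMn !exprS !invfM e_inv invrN1; ring.
rewrite hA hB hc.
split.
- by field.
- by field.
- by field.
- by field.
Qed.
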